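(* Consider the closed-loop system $\dot p=-R(p)^Te(p)-(L_o\otimes I_d)\bar p$, i.e. \[ \dot p_i=\sum_{j\in\mathcal{N}_i}(p_j-p_i)\big(\|p_j-p_i\|^2-d_{ij}^2\big)+\sum_{j\in\mathcal{N}_i^o}\Big((p_j-p_i)-(\hat p_j-\hat p_i)\Big),\quad i=1,\dots,n. \] This system is a gradient descent flow, $\dot p=-\nabla V(p)$, of the potential \[ V=\tfrac14\sum_{(i,j)\in\mathcal{E}}\big(\|p_i-p_j\|^2-d_{ij}^2\big)^2+\tfrac12\sum_{(i,j)\in\mathcal{E}_o}\big\|(p_j-p_i)-(\hat p_j-\hat p_i)\big\|^2, \] with $\dot V=-\|R^Te+(L_o\otimes I_d)\bar p\|^2\le 0$. Moreover, the induced dynamics of the relative position vector $z=(H\otimes I_d)p$ is self-contained, and its solutions converge to the largest invariant set contained in \[ \mathcal{O}(z)=\{z:\ R(z)^Te(z)+(L_o\otimes I_d)\bar p(z)=0\}. \]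
   Context: Let $d\in\{2,3\}$, $n\ge2$ agents with positions $p_i\in\mathbb{R}^d$, $p=[p_1^T,\dots,p_n^T]^T\in\mathbb{R}^{dn}$. $\mathcal{G}=(\mathcal{V},\mathcal{E})$ is an undirected graph on $\{1,\dots,n\}$ with $m$ edges, $\mathcal{N}_i=\{j:(i,j)\in\mathcal{E}\}$. Give each edge $k$ an arbitrary orientation with head $j$ and tail $i$; the incidence matrix $H\in\mathbb{R}^{m\times n}$ has $h_{ki}=1$ if edge $k$ sinks at $i$, $-1$ if it leaves $i$, $0$ otherwise. Then $z_k=p_j-p_i$, $z=[z_1^T,\dots,z_m^T]^T=(H\otimes I_d)p$, $Z(z)=\mathrm{diag}(z_1,\dots,z_m)\in\mathbb{R}^{dm\times m}$ (block diagonal), and the rigidity matrix is $R=Z(z)^T(H\otimes I_d)\in\mathbb{R}^{m\times dn}$. Each edge $k=(i,j)$ has desired distance $d_k=d_{ij}>0$ and squared distance error $e_k=\|p_i-p_j\|^2-d_k^2$, $e=[e_1,\dots,e_m]^T$. A set of orientation edges $\mathcal{E}_o\subseteq\mathcal{E}$ defines the undirected graph $\mathcal{G}_o=(\mathcal{V},\mathcal{E}_o)$ with neighbor sets $\mathcal{N}_i^o$ and Laplacian $L_o\in\mathbb{R}^{n\times n}$. Agents incident to some edge of $\mathcal{E}_o$ (orientation agents) are assigned points $\hat p_i\in\mathbb{R}^d$ so that $\hat p_j-\hat p_i$ is the desired relative position for $(i,j)\in\mathcal{E}_o$, with $\|\hat p_j-\hat p_i\|=d_{ij}$. Define $\bar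 p=[\bar p_1^T,\dots,\bar p_n^T]^T$ with $\bar p_i=p_i-\hat p_i$ for orientation agents and $\bar p_i=0$ otherwise; note $(L_o\otimes I_d)\bar p$ depends only on relative positions (hence on $z$). *)

(* Defs.v *)
From HB Require Import structures.
From mathcomp Require Import all_boot all_order all_algebra.
From mathcomp Require Import all_classical all_reals all_analysis.
Set Implicit Arguments. Unset Strict Implicit. Unset Printing Implicit Defensive.
Import Order.TTheory GRing.Theory Num.Theory.
Import numFieldNormedType.Exports.
Local Open Scope ring_scope.
Local Open Scope classical_set_scope.

(* Conventions:
   - positions p = [p_1^T; ...; p_n^T] are stored as an n x d matrix P
     whose i-th row is p_i^T (instead of the stacked vector in R^{dn});
     under this identification (H (x) I_d) p  <->  H *m P (row k = z_k^T)
     and (L_o (x) I_d) pbar <-> L_o *m Pbar.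
   - the graph has m edges k : 'I_m; edge k is oriented from tail [tl k]
     (= i) to head [hd k] (= j), so z_k = p_(hd k) - p_(tl k).
   - [dist k] is the desired distance d_k of edge k.
   - the orientation edges form a subset [Eo] of the edges. *)

Section Formation.
Variables (R : realType) (n d m : nat).
Variables (tl hd : 'I_m -> 'I_n) (dist : 'I_m -> R) (Eo : {set 'I_m}).
Variable (phat : 'I_n -> 'rV[R]_d).

Definition sqnorm (v : 'rV[R]_d) : R := \sum_(c < d) v 0 c ^+ 2.
Definition enorm (v : 'rV[R]_d) : R := Num.sqrt (sqnorm v).
Definition frob_dot (k l : nat) (A B : 'M[R]_(k, l)) : R :=
  \sum_(i < k) \sum_(c < l) A i c * B i c.
Definition frob_sqnorm (k l : nat) (A : 'M[R]_(k, l)) : R := frob_dot A A.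

Definition incidence : 'M[R]_(m, n) :=
  \matrix_(k < m, i < n)
    (if i == hd k then 1 else if i == tl k then -1 else 0).

Definition relpos (P : 'M[R]_(n, d)) : 'M[R]_(m, d) := incidence *m P.

Definition err (P : 'M[R]_(n, d)) (k : 'I_m) : R :=
  sqnorm (row (tl k) P - row (hd k) P) - dist k ^+ 2.

(* row k of the rigidity matrix R = Z(z)^T (H (x) I_d), reshaped as n x d:
   entry (i,c) is h_{ki} (z_k)_c *)
Definition rigidity_row (P : 'M[R]_(n, d)) (k : 'I_m) : 'M[R]_(n, d) :=
  \matrix_(i < n, c < d) (incidence k i * relpos P k c).

Definition rigT_err (P : 'M[R]_(n, d)) : 'M[R]_(n, d) :=
  \sum_(k < m) err P k *: rigidity_row P k.

Definition adj_o (i j : 'I_n) : bool :=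
  [exists k in Eo, ((tl k == i) && (hd k == j)) || ((tl k == j) && (hd k == i))].
Definition nbr_o (i : 'I_n) : {set 'I_n} := [set j | adj_o i j].
Definition lap_o : 'M[R]_n :=
  \matrix_(i < n, j < n)
    (if i == j then (#|nbr_o i|)%:R else - (adj_o i j)%:R).

Definition orient_agent (i : 'I_n) : bool :=
  [exists k in Eo, (tl k == i) || (hd k == i)].
Definition pbar (P : 'M[R]_(n, d)) : 'M[R]_(n, d) :=
  \matrix_(i < n, c < d) (if orient_agent i then P i c - phat i 0 c else 0).

Definition grad_term (P : 'M[R]_(n, d)) : 'M[R]_(n, d) :=
  rigT_err P + lap_o *m pbar P.

Definition closed_loop (P : 'M[R]_(n, d)) : 'M[R]_(n, d) := - grad_term P.

Definition potential (P : 'M[R]_(n, d)) : R :=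
  4^-1 * \sum_(k < m) err P k ^+ 2
  + 2^-1 * \sum_(k in Eo)
       sqnorm ((row (hd k) P - row (tl k) P) - (phat (hd k) - phat (tl k))).

Definition fwd_solution (p : R -> 'M[R]_(n, d)) : Prop :=
  (p t @[t --> 0^'+] --> p 0) /\
  forall t : R, 0 < t -> is_derive t (1 : R) p (closed_loop (p t)).

Definition full_solution (p : R -> 'M[R]_(n, d)) : Prop :=
  forall t : R, is_derive t (1 : R) p (closed_loop (p t)).

Definition O_set : set 'M[R]_(m, d) :=
  [set z | exists P, z = relpos P /\ grad_term P = 0].

Definition z_invariant (S : set 'M[R]_(m, d)) : Prop :=
  (forall p, fwd_solution p -> S (relpos (p 0)) ->
     forall t, 0 <= t -> S (relpos (p t))) /\
  (forall z0, S z0 -> exists p, full_solution p /\ relpos (p 0) = z0 /\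
     forall t, S (relpos (p t))).

Definition largest_invariant_in_O : set 'M[R]_(m, d) :=
  [set z | exists S, z_invariant S /\ S `<=` O_set /\ S z].

Definition converges_to_set (z : R -> 'M[R]_(m, d)) (M : set 'M[R]_(m, d)) :=
  forall eps : R, 0 < eps ->
    \forall t \near +oo, exists2 y, M y & Num.sqrt (frob_sqnorm (z t - y)) < eps.

End Formation.

(* Submission.v *)
Require Import Defs.
From HB Require Import structures.
From mathcomp Require Import all_boot all_order all_algebra.
From mathcomp Require Import all_classical all_reals all_analysis.
From mathcomp Require Import ring lra.
Set Implicit Arguments. Unset Strict Implicit. Unset Printing Implicit Defensive.
Import Order.TTheory GRing.Theory Num.Theory.
Import numFieldNormedType.Exports.
Local Open Scope ring_scope.
Local Open Scope classical_set_scope.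


Section Alg.
Variables (R : realType) (n d m : nat).
Variables (tl hd : 'I_m -> 'I_n) (dist : 'I_m -> R) (Eo : {set 'I_m}).
Variable (phat : 'I_n -> 'rV[R]_d).
Hypothesis tlhd : forall k, tl k != hd k.
Hypothesis uniqE : forall k l, [set tl k; hd k] = [set tl l; hd l] -> k = l.

Local Notation H := (incidence R tl hd).

Lemma incE k i : H k i = (if i == hd k then 1 else if i == tl k then -1 else 0).
Proof. by rewrite mxE. Qed.

Lemma sum_inc k (x : 'I_n -> R) : \sum_i H k i * x i = x (hd k) - x (tl k).
Proof.
rewrite (bigD1 (hd k)) //= (bigD1 (tl k)) /=; last by rewrite tlhd.
rewrite big1; last first.
  move=> i /andP[ni1 ni2]; rewrite incE (negbTE ni2) (negbTE ni1); by rewrite mul0r.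
rewrite !incE eqxx (negbTE (tlhd k)) eqxx; lra.
Qed.

Lemma relposE (P : 'M[R]_(n, d)) k c : relpos tl hd P k c = P (hd k) c - P (tl k) c.
Proof. by rewrite /relpos mxE sum_inc. Qed.


Definition pair_set (k : 'I_m) := [set tl k; hd k].

Lemma inc_sq k i : H k i * H k i = ((tl k == i) || (hd k == i))%:R.
Proof.
rewrite incE; case: (i =P hd k) => [->|nh]; first by rewrite eqxx orbT mulr1.
case: (i =P tl k) => [->|nt]; first by rewrite eqxx /=; lra.
rewrite mul0r; case: (tl k =P i) => [e|_]; first by case: nt.
by case: (hd k =P i) => [e|_] //; case: nh.
Qed.

Lemma inc_prod k i j : i != j ->
  H k i * H k j = - (((tl k == i) && (hd k == j)) || ((tl k == j) && (hd k == i)))%:R.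
Proof.
move=> nij; rewrite !incE.
case: (i =P hd k) => [ei|nhi]; case: (i =P tl k) => [eti|nti];
case: (j =P hd k) => [ej|nhj]; case: (j =P tl k) => [etj|ntj];
rewrite /= ?ei ?ej ?eti ?etj ?eqxx //=;
try (by move: nij; rewrite ?ei ?ej ?eti ?etj ?eqxx);
try (by move: (tlhd k); rewrite -?ei -?ej -?eti -?etj ?eqxx);
rewrite ?mulr0 ?mul0r ?mulr1 ?mul1r;
repeat match goal with
| |- context [?a == ?b] => case: (a =P b) => [?|?]; subst
end; simpl; try lra;
try (by exfalso; auto); try (by move: (tlhd k); rewrite ?eqxx); idtac.
Qed.

Lemma pair_set_eq k l : pair_set k = pair_set l -> k = l.
Proof. exact: uniqE. Qed.

Lemma adj_oP i j : reflect (exists2 k, k \in Eo &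
   ((tl k == i) && (hd k == j)) || ((tl k == j) && (hd k == i))) (adj_o tl hd Eo i j).
Proof.
apply: (iffP existsP) => [[k /andP[kE b]]|[k kE b]]; first by exists k.
by exists k; rewrite kE.
Qed.

Lemma pair_of k i j : ((tl k == i) && (hd k == j)) || ((tl k == j) && (hd k == i)) ->
  pair_set k = [set i; j].
Proof.
rewrite /pair_set; case/orP=> /andP[/eqP-> /eqP->] //; exact: setUC.
Qed.

Lemma lap_oE i j : lap_o R tl hd Eo i j = \sum_(k in Eo) H k i * H k j.
Proof.
rewrite mxE; case: (i =P j) => [<-|/eqP nij].
  under eq_bigr do rewrite inc_sq.
  rewrite -natr_sum; congr (_%:R).
  pose other k := if tl k == i then hd k else tl k.
  set S := [set k in Eo | (tl k == i) || (hd k == i)].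
  have oth k : k \in S -> pair_set k = [set i; other k].
    rewrite inE => /andP[_]; rewrite /other /pair_set.
    case: (tl k =P i) => [->|_] //= /eqP ->; exact: setUC.
  have img : nbr_o tl hd Eo i = other @: S.
    apply/setP => x; rewrite inE; apply/adj_oP/imsetP.
    - case=> k kE b; exists k.
      + rewrite inE kE /=; case/orP: b => /andP[/eqP-> /eqP->]; by rewrite eqxx ?orbT.
      + rewrite /other; case/orP: b => /andP[/eqP e1 /eqP e2]; first by rewrite e1 eqxx.
        case: (tl k =P i) => [e3|//]; exfalso; move: (tlhd k); by rewrite e2 e3 eqxx.
    - case=> k; rewrite inE => /andP[kE b] ->; exists k => //.
      rewrite /other; case: (tl k =P i) => [->|ne]; first by rewrite !eqxx.
      by move: b; rewrite (introF eqP ne) /= eqxx.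
  rewrite img card_in_imset; last first.
    move=> k l kS lS e; apply: pair_set_eq; by rewrite (oth _ kS) (oth _ lS) e.
  rewrite -sum1_card [RHS]big_mkcond [LHS]big_mkcond /=; apply: eq_bigr => k _.
  by rewrite inE; case: (k \in Eo); case: (_ || _).
under eq_bigr do rewrite inc_prod //.
rewrite sumrN; congr (- _).
case: (adj_oP i j) => [[k0 k0E b0]|nadj].
  rewrite (bigD1 k0) //= b0 big1 ?addr0 // => l /andP[lE nl].
  case bl: (_ || _) => //; exfalso; move/negP: nl; apply; apply/eqP.
  by apply: pair_set_eq; rewrite (pair_of b0) (pair_of bl).
rewrite big1 // => l lE; case bl: (_ || _) => //; exfalso; apply: nadj; by exists l.
Qed.

Definition zhat k : 'rV[R]_d := phat (hd k) - phat (tl k).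
Definition eZ (z : 'M[R]_(m, d)) k := \sum_(c < d) z k c ^+ 2 - dist k ^+ 2.
Definition Az (z : 'M[R]_(m, d)) : 'M[R]_(m, d) :=
  \matrix_(k, c) (eZ z k * z k c + (k \in Eo)%:R * (z k c - zhat k 0 c)).
Definition Uz (z : 'M[R]_(m, d)) : R :=
  4^-1 * \sum_k eZ z k ^+ 2
  + 2^-1 * \sum_(k in Eo) \sum_(c < d) (z k c - zhat k 0 c) ^+ 2.

Lemma errE (P : 'M[R]_(n, d)) k : err tl hd dist P k = eZ (relpos tl hd P) k.
Proof.
rewrite /err /eZ /sqnorm; congr (_ - _); apply: eq_bigr => c _.
by rewrite relposE !mxE -sqrrN opprB.
Qed.

Lemma potentialE (P : 'M[R]_(n, d)) : potential tl hd dist Eo phat P = Uz (relpos tl hd P).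
Proof.
rewrite /potential /Uz; congr (_ * _ + _ * _).
  by apply: eq_bigr => k _; rewrite errE.
apply: eq_bigr => k _; rewrite /sqnorm; apply: eq_bigr => c _.
by rewrite relposE !mxE.
Qed.

Lemma orient_tl k : k \in Eo -> orient_agent tl hd Eo (tl k).
Proof. by move=> kE; apply/existsP; exists k; rewrite kE eqxx. Qed.
Lemma orient_hd k : k \in Eo -> orient_agent tl hd Eo (hd k).
Proof. by move=> kE; apply/existsP; exists k; rewrite kE eqxx orbT. Qed.

Lemma rigE (P : 'M[R]_(n, d)) k i c :
  rigidity_row tl hd P k i c = H k i * relpos tl hd P k c.
Proof. by rewrite /rigidity_row mxE. Qed.

Lemma pbarE (P : 'M[R]_(n, d)) i c : pbar tl hd Eo phat P i c =
  if orient_agent tl hd Eo i then P i c - phat i 0 c else 0.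
Proof. by rewrite /pbar mxE. Qed.

Lemma grad_termE (P : 'M[R]_(n, d)) :
  grad_term tl hd dist Eo phat P = H^T *m Az (relpos tl hd P).
Proof.
apply/matrixP => i c.
rewrite /grad_term [LHS]mxE /rigT_err summxE [(lap_o _ _ _ _ *m _) i c]mxE.
under [X in X + _ = _]eq_bigr do rewrite mxE rigE.
under [X in _ + X = _]eq_bigr do rewrite lap_oE mulr_suml.
rewrite exchange_big /=.
under [X in _ + X = _]eq_bigr => k kE.
  under eq_bigr do rewrite -mulrA.
  rewrite -mulr_sumr sum_inc !pbarE (orient_tl kE) (orient_hd kE).
  over.
rewrite [RHS]mxE.
under [RHS]eq_bigr do rewrite [_^T _ _]mxE [Az _ _ _]mxE mulrDr.
rewrite big_split /=; congr (_ + _).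
  by apply: eq_bigr => k _; rewrite errE; ring.
rewrite [LHS]big_mkcond /=; apply: eq_bigr => k _.
case: (k \in Eo) => /=; last by rewrite mul0r mulr0.
rewrite mul1r relposE /zhat !mxE; congr (_ * _); ring.
Qed.
End Alg.


Section Norms.
Variable (K : realType).

Lemma mxn_entry p q (X : 'M[K]_(p, q)) i j : `|X i j| <= `|X|.
Proof.
rewrite [leRHS]/Num.Def.normr /= mx_normrE; apply/bigmax_geP; right => /=.
by exists (i, j).
Qed.

Lemma mxn_le p q (X : 'M[K]_(p, q)) b : 0 <= b ->
  (forall i j, `|X i j| <= b) -> `|X| <= b.
Proof.
move=> b0 Hb; rewrite [leLHS]/Num.Def.normr /= mx_normrE.
by apply: bigmax_le => // -[i j] _; exact: Hb.
Qed.

Lemma mxn_ge0 p q (X : 'M[K]_(p, q)) : 0 <= `|X|.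
Proof. exact: normr_ge0. Qed.

Lemma mxn_attain p q (X : 'M[K]_(p, q)) :
  `|X| = 0 \/ exists i j, `|X| = `|X i j|.
Proof.
have [->|nz] := eqVneq `|X| 0; first by left.
right; have := @mx_norm_neq0 K p q X; rewrite /Num.Def.normr /= in nz *.
by case/(_ nz) => -[i j] /= ->; exists i, j.
Qed.

Lemma frob_ge0 p q (X : 'M[K]_(p, q)) : 0 <= frob_sqnorm X.
Proof.
rewrite /frob_sqnorm /frob_dot; apply: sumr_ge0 => i _; apply: sumr_ge0 => j _.
by rewrite -expr2 sqr_ge0.
Qed.

Lemma frob_ge p q (X : 'M[K]_(p, q)) : `|X| ^+ 2 <= frob_sqnorm X.
Proof.
case: (mxn_attain X) => [->|[i [j ->]]]; first by rewrite expr0n /= frob_ge0.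
rewrite /frob_sqnorm /frob_dot (bigD1 i) //= (bigD1 j) //= real_normK ?num_real //.
rewrite -expr2 -addrA lerDl addr_ge0 //; apply: sumr_ge0 => *.
  by rewrite -expr2 sqr_ge0.
by apply: sumr_ge0 => *; rewrite -expr2 sqr_ge0.
Qed.

Lemma frob_le p q (X : 'M[K]_(p, q)) :
  frob_sqnorm X <= (p * q)%:R * `|X| ^+ 2.
Proof.
rewrite /frob_sqnorm /frob_dot.
have -> : (p * q)%:R * `|X| ^+ 2 = \sum_(i < p) \sum_(j < q) `|X| ^+ 2.
  under [RHS]eq_bigr do rewrite sumr_const card_ord.
  by rewrite sumr_const card_ord -mulrnA mulr_natl mulnC.
apply: ler_sum => i _; apply: ler_sum => j _.
rewrite -expr2 -real_normK ?num_real //; apply: lerXn2r; rewrite ?nnegrE //.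
exact: mxn_entry.
Qed.

Definition mabsum p q (M : 'M[K]_(p, q)) := \sum_i \sum_j `|M i j|.

Lemma mabsum_ge0 p q (M : 'M[K]_(p, q)) : 0 <= mabsum M.
Proof. by apply: sumr_ge0 => *; apply: sumr_ge0. Qed.

Lemma mxn_mul p q r (M : 'M[K]_(p, q)) (X : 'M[K]_(q, r)) :
  `|M *m X| <= mabsum M * `|X|.
Proof.
apply: mxn_le; first by rewrite mulr_ge0 ?mabsum_ge0.
move=> i c; rewrite mxE; apply: le_trans (ler_norm_sum _ _ _) _.
apply: (@le_trans _ _ (\sum_j `|M i j| * `|X|)).
  apply: ler_sum => j _; rewrite normrM; apply: ler_wpM2l => //; exact: mxn_entry.
rewrite -mulr_suml; apply: ler_wpM2r => //.
rewrite /mabsum (bigD1 i) //= lerDl; apply: sumr_ge0 => *; apply: sumr_ge0 => *; exact: normr_ge0.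
Qed.

End Norms.

Section Flow.
Variables (R : realType) (n d m : nat).
Variables (tl hd : 'I_m -> 'I_n) (dist : 'I_m -> R) (Eo : {set 'I_m}).
Variable (phat : 'I_n -> 'rV[R]_d).

Local Notation Az := (Az tl hd dist Eo phat).
Local Notation eZ := (eZ dist).

Lemma sqr_le_B (x B : R) : `|x| <= B -> x ^+ 2 <= B ^+ 2.
Proof. by move=> h; rewrite -real_normK ?num_real // lerXn2r // ?nnegrE (le_trans _ h). Qed.

Lemma Az_lip B : 0 <= B -> exists2 L, 0 <= L & forall z z' : 'M[R]_(m, d),
  `|z| <= B -> `|z'| <= B -> `|Az z - Az z'| <= L * `|z - z'|.
Proof.
move=> B0.
pose D0 := \sum_k dist k ^+ 2.
have D0ge k : dist k ^+ 2 <= D0.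
  rewrite /D0 (bigD1 k) //= lerDl; apply: sumr_ge0 => *; exact: sqr_ge0.
have D00 : 0 <= D0 by apply: sumr_ge0 => *; exact: sqr_ge0.
exists (d%:R * B ^+ 2 + D0 + 2 * d%:R * B ^+ 2 + 1).
  by rewrite !addr_ge0 ?mulr_ge0 ?exprn_ge0.
move=> z z' zB z'B.
set Dn := `|z - z'|.
have Dn0 : 0 <= Dn by exact: normr_ge0.
have entB (w : 'M[R]_(m, d)) k c : `|w| <= B -> `|w k c| <= B.
  by move=> h; apply: le_trans h; exact: mxn_entry.
have dlt k c : `|z k c - z' k c| <= Dn by move: (mxn_entry (z - z') k c); rewrite !mxE => h.
have eZb k : `|eZ z k| <= d%:R * B ^+ 2 + D0.
  rewrite /Submission.eZ; apply: le_trans (ler_normB _ _) _.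
  rewrite ger0_norm; last by apply: sumr_ge0 => *; exact: sqr_ge0.
  rewrite ger0_norm ?sqr_ge0 //; apply: lerD => //.
  have -> : d%:R * B ^+ 2 = \sum_(c < d) B ^+ 2 by rewrite sumr_const card_ord mulr_natl.
  by apply: ler_sum => c _; apply: sqr_le_B; apply: entB.
have eZd k : `|eZ z k - eZ z' k| <= 2 * d%:R * B * Dn.
  have -> : eZ z k - eZ z' k = \sum_(c < d) (z k c ^+ 2 - z' k c ^+ 2).
    by rewrite /Submission.eZ sumrB; ring.
  apply: le_trans (ler_norm_sum _ _ _) _.
  have -> : 2 * d%:R * B * Dn = \sum_(c < d) (2 * B * Dn).
    by rewrite sumr_const card_ord -[X in _ = X]mulr_natl; ring.
  apply: ler_sum => c _.
  have -> : z k c ^+ 2 - z' k c ^+ 2 = (z k c - z' k c) * (z k c + z' k c) by ring.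
  rewrite normrM; have h1 := dlt k c; have h2 := entB _ k c zB; have h3 := entB _ k c z'B.
  have h4 : `|z k c + z' k c| <= 2 * B by apply: le_trans (ler_normD _ _) _; lra.
  have := ler_pM (normr_ge0 _) (normr_ge0 _) h1 h4; lra.
apply: mxn_le; first by rewrite mulr_ge0 // !addr_ge0 ?mulr_ge0 ?exprn_ge0.
move=> k c; rewrite !mxE.
set w := (phat (hd k) 0 c - phat (tl k) 0 c).
set e := (k \in Eo)%:R.
have -> : eZ z k * z k c + e * (z k c - w)
   - (eZ z' k * z' k c + e * (z' k c - w))
   = eZ z k * (z k c - z' k c) + (eZ z k - eZ z' k) * z' k c + e * (z k c - z' k c).
  by ring.
have e1 : `|e| <= 1 by rewrite /e; case: (k \in Eo); rewrite ?normr1 ?normr0.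
have a1 := eZb k; have a2 := eZd k; have a3 := dlt k c; have a4 := entB _ k c z'B.
apply: le_trans (ler_normD _ _) _; rewrite normrM.
apply: le_trans (lerD (ler_normD _ _) (lexx _)) _; rewrite !normrM.
have p1 : `|eZ z k| * `|z k c - z' k c| <= (d%:R * B ^+ 2 + D0) * Dn by apply: ler_pM.
have p2 : `|eZ z k - eZ z' k| * `|z' k c| <= (2 * d%:R * B * Dn) * B by apply: ler_pM.
have p3 : `|e| * `|z k c - z' k c| <= 1 * Dn by apply: ler_pM.
have -> : (d%:R * B ^+ 2 + D0 + 2 * d%:R * B ^+ 2 + 1) * Dn =
   (d%:R * B ^+ 2 + D0) * Dn + (2 * d%:R * B * Dn) * B + 1 * Dn by ring.
by apply: lerD; [apply: lerD|].
Qed.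

End Flow.


Section DerHelpers.
Variables (R : realType) (p q : nat).
Local Notation U := 'M[R]_(p, q).
Implicit Types (f g : U -> R) (P h : U).

Lemma isd_coord P h i j : is_derive P h (fun Q : U => Q i j) (h i j).
Proof.
have @f : {linear U -> R}.
  by exists (fun N : U => N i j); do 2![eexists]; do ?[constructor];
     rewrite ?mxE// => ? *; rewrite ?mxE//; move=> ?; rewrite !mxE.
apply: DeriveDef; first exact/diff_derivable/differentiable_coord.
rewrite deriveE; last exact: differentiable_coord.
rewrite (_ : (fun _ => _) = f) // diff_lin //; exact: coord_continuous.
Qed.

Lemma isd_cst P h (c : R) : is_derive P h (fun _ : U => c) 0.
Proof. exact: is_derive_cst. Qed.

Lemma isd_add P h f g df dg : is_derive P h f df -> is_derive P h g dg ->
  is_derive P h (fun Q => f Q + g Q) (df + dg).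
Proof. by move=> a b; apply: is_deriveD. Qed.

Lemma isd_sub P h f g df dg : is_derive P h f df -> is_derive P h g dg ->
  is_derive P h (fun Q => f Q - g Q) (df - dg).
Proof. by move=> a b; apply: is_deriveB. Qed.

Lemma isd_mul P h f g df dg : is_derive P h f df -> is_derive P h g dg ->
  is_derive P h (fun Q => f Q * g Q) (f P * dg + g P * df).
Proof. by move=> a b; have := is_deriveM a b. Qed.

Lemma isd_val P h f df df' : is_derive P h f df -> df = df' -> is_derive P h f df'.
Proof. by move=> a <-. Qed.

Lemma isd_ext P h f g df : is_derive P h f df -> f = g -> is_derive P h g df.
Proof. by move=> a <-. Qed.

Lemma isd_big (I : Type) (r : seq I) (Pr : pred I) P h (F : I -> U -> R) (dF : I -> R) :
  (forall i, Pr i -> is_derive P h (F i) (dF i)) ->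
  is_derive P h (fun Q => \sum_(i <- r | Pr i) F i Q) (\sum_(i <- r | Pr i) dF i).
Proof.
move=> HF; elim: r => [|a r IH].
  by apply: (isd_ext (isd_val (isd_cst P h 0) _)); [rewrite big_nil|apply/funext => Q; rewrite big_nil].
case Pa: (Pr a).
  apply: (isd_ext (isd_val (isd_add (HF a Pa) IH) _)); first by rewrite big_cons Pa.
  by apply/funext => Q; rewrite big_cons Pa.
apply: (isd_ext (isd_val IH _)); first by rewrite big_cons Pa.
by apply/funext => Q; rewrite big_cons Pa.
Qed.

Lemma dif_big (I : Type) (r : seq I) (Pr : pred I) P (F : I -> U -> R) :
  (forall i, Pr i -> differentiable (F i) P) ->
  differentiable (fun Q => \sum_(i <- r | Pr i) F i Q) P.
Proof.
move=> HF; elim: r => [|a r IH].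
  rewrite (_ : (fun _ => _) = cst 0); first exact: differentiable_cst.
  by apply/funext => Q; rewrite big_nil.
case Pa: (Pr a).
  rewrite (_ : (fun _ => _) = F a + (fun Q => \sum_(i <- r | Pr i) F i Q)).
    by apply: differentiableD; [exact: HF|exact: IH].
  by apply/funext => Q; rewrite big_cons Pa.
rewrite (_ : (fun _ => _) = (fun Q => \sum_(i <- r | Pr i) F i Q)) //.
by apply/funext => Q; rewrite big_cons Pa.
Qed.

Lemma dif_add P f g : differentiable f P -> differentiable g P ->
  differentiable (fun Q => f Q + g Q) P.
Proof. by move=> a b; have := differentiableD a b. Qed.
Lemma dif_sub P f g : differentiable f P -> differentiable g P ->
  differentiable (fun Q => f Q - g Q) P.
Proof. by move=> a b; have := differentiableB a b. Qed.
Lemma dif_mul P f g : differentiable f P -> differentiable g P ->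
  differentiable (fun Q => f Q * g Q) P.
Proof. by move=> a b; have := differentiableM a b. Qed.
Lemma dif_cst P (c : R) : differentiable (fun _ : U => c) P.
Proof. exact: differentiable_cst. Qed.

End DerHelpers.

Section Grad.
Variables (R : realType) (n d m : nat).
Variables (tl hd : 'I_m -> 'I_n) (dist : 'I_m -> R) (Eo : {set 'I_m}).
Variable (phat : 'I_n -> 'rV[R]_d).
Hypothesis tlhd : forall k, tl k != hd k.
Hypothesis uniqE : forall k l, [set tl k; hd k] = [set tl l; hd l] -> k = l.

Local Notation H := (incidence R tl hd).
Local Notation relpos := (relpos tl hd).
Local Notation Az := (Az tl hd dist Eo phat).
Local Notation Uz := (Uz tl hd dist Eo phat).
Local Notation eZ := (eZ dist).
Local Notation zh k c := (zhat tl hd phat k 0 c).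
Local Notation M := 'M[R]_(n, d).

Definition dr (h : M) k c := h (hd k) c - h (tl k) c.

Lemma isd_relpos (P h : M) k c : is_derive P h (fun Q : M => relpos Q k c) (dr h k c).
Proof.
apply: isd_ext; first exact: (isd_sub (isd_coord P h (hd k) c) (isd_coord P h (tl k) c)).
by apply/funext => Q; rewrite relposE.
Qed.

Lemma isd_eZ (P h : M) k : is_derive P h (fun Q : M => eZ (relpos Q) k)
  (\sum_(c < d) (relpos P k c * dr h k c + relpos P k c * dr h k c) - 0).
Proof.
have := isd_sub (isd_big (index_enum 'I_d) (Pr := fun _ => true)
  (fun c _ => isd_mul (isd_relpos P h k c) (isd_relpos P h k c))) (isd_cst P h (dist k ^+ 2)).
move/isd_ext; apply.
by apply/funext => Q; rewrite /Submission.eZ; congr (_ - _); apply: eq_bigr => c _; rewrite expr2.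
Qed.

Lemma isd_U (P h : M) : is_derive P h (fun Q : M => Uz (relpos Q))
  (\sum_k \sum_(c < d) Az (relpos P) k c * dr h k c).
Proof.
apply: isd_val.
  have := isd_add
    (isd_mul (isd_cst P h 4^-1) (isd_big (index_enum 'I_m) (Pr := fun _ => true)
       (fun k _ => isd_mul (isd_eZ P h k) (isd_eZ P h k))))
    (isd_mul (isd_cst P h 2^-1) (isd_big (index_enum 'I_m) (Pr := fun k => k \in Eo)
       (fun k _ => isd_big (index_enum 'I_d) (Pr := fun _ => true) (fun c _ =>
         isd_mul (isd_sub (isd_relpos P h k c) (isd_cst P h (zh k c)))
                 (isd_sub (isd_relpos P h k c) (isd_cst P h (zh k c))))))).
  move/isd_ext; apply.
  by apply/funext => Q; rewrite /Submission.Uz; do 2 congr (_ * _ + _ * _);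
     apply: eq_bigr => k _; rewrite ?expr2 //; apply: eq_bigr => c _; rewrite expr2.
rewrite !mulr0 !addr0 [\sum_(i in Eo) _]big_mkcond /=.
rewrite mulr_sumr [X in _ + X = _]mulr_sumr -big_split /=.
apply: eq_bigr => k _.
under [RHS]eq_bigr do rewrite mxE.
case: (k \in Eo) => /=.
  rewrite !subr0 !mulrDr !mulr_sumr -!big_split /=; apply: eq_bigr => c _; field.
  all: try done.
rewrite ?subr0 ?mulr0 ?addr0 !mulrDr !mulr_sumr -!big_split /=; apply: eq_bigr => c _; field.
all: try done.
Qed.

Lemma frob_dot_HT (A : 'M[R]_(m, d)) (h : M) :
  frob_dot (H^T *m A) h = \sum_k \sum_(c < d) A k c * dr h k c.
Proof.
rewrite /frob_dot.
under eq_bigr do under eq_bigr do rewrite mxE mulr_suml.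
under eq_bigr do rewrite exchange_big.
rewrite exchange_big /=.
apply: eq_bigr => k _; rewrite exchange_big /=; apply: eq_bigr => c _.
rewrite /dr -(sum_inc tlhd k (fun i => h i c)) mulr_sumr; apply: eq_bigr => i _; rewrite mxE; ring.
Qed.


Lemma dif_relpos (P : M) k c : differentiable (fun Q : M => relpos Q k c) P.
Proof.
rewrite (_ : (fun _ => _) = (fun Q : M => Q (hd k) c - Q (tl k) c)).
  by apply: dif_sub; apply: differentiable_coord.
by apply/funext => Q; rewrite relposE.
Qed.

Lemma dif_U (P : M) : differentiable (fun Q : M => Uz (relpos Q)) P.
Proof.
rewrite /Submission.Uz; apply: dif_add; apply: dif_mul; try exact: dif_cst.
  apply: dif_big => k _.
  have e : differentiable (fun Q : M => eZ (relpos Q) k) P.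
    rewrite /Submission.eZ; apply: dif_sub; last exact: dif_cst.
    apply: dif_big => c _.
    rewrite (_ : (fun _ => _) = (fun Q : M => relpos Q k c * relpos Q k c)).
      by apply: dif_mul; apply: dif_relpos.
    by apply/funext => Q; rewrite expr2.
  by rewrite (_ : (fun _ => _) = (fun Q : M => eZ (relpos Q) k * eZ (relpos Q) k));
    [apply: dif_mul|apply/funext => Q; rewrite expr2].
apply: dif_big => k _; apply: dif_big => c _.
rewrite (_ : (fun _ => _) = (fun Q : M => (relpos Q k c - zh k c) * (relpos Q k c - zh k c))).
  by apply: dif_mul; apply: dif_sub; [apply: dif_relpos|apply: dif_cst|apply: dif_relpos|apply: dif_cst].
by apply/funext => Q; rewrite expr2.
Qed.

Lemma frob_dotNl p q (X Y : 'M[R]_(p, q)) : frob_dot (- X) Y = - frob_dot X Y.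
Proof.
rewrite /frob_dot -sumrN; apply: eq_bigr => i _; rewrite -sumrN; apply: eq_bigr => j _.
by rewrite mxE mulNr.
Qed.

Lemma frob_dotNr p q (X Y : 'M[R]_(p, q)) : frob_dot X (- Y) = - frob_dot X Y.
Proof.
rewrite /frob_dot -sumrN; apply: eq_bigr => i _; rewrite -sumrN; apply: eq_bigr => j _.
by rewrite mxE mulrN.
Qed.

Lemma VE : potential tl hd dist Eo phat = (fun Q : M => Uz (relpos Q)).
Proof. by apply/funext => Q; rewrite (potentialE dist Eo phat tlhd). Qed.

Lemma part1 (P : M) : differentiable (potential tl hd dist Eo phat) P /\
  forall h : M, is_derive P h (potential tl hd dist Eo phat)
     (- frob_dot (closed_loop tl hd dist Eo phat P) h).
Proof.
rewrite VE; split; first exact: dif_U.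
move=> h; apply: (isd_val (isd_U P h)).
by rewrite /closed_loop frob_dotNl opprK (grad_termE dist Eo phat tlhd uniqE) frob_dot_HT.
Qed.

Lemma part2 (p : R -> M) (t : R) :
  is_derive t (1 : R) p (closed_loop tl hd dist Eo phat (p t)) ->
  is_derive t (1 : R) (potential tl hd dist Eo phat \o p)
     (- frob_sqnorm (grad_term tl hd dist Eo phat (p t))) /\
  - frob_sqnorm (grad_term tl hd dist Eo phat (p t)) <= 0.
Proof.
move=> hp; split; last by rewrite oppr_le0 frob_ge0.
have dV := (part1 (p t)).1.
have dp : differentiable p t by apply/derivable1_diffP; exact: ex_derive.
apply: DeriveDef.
  by apply: diff_derivable; apply: differentiable_comp.
rewrite deriveE; last by apply: differentiable_comp.
rewrite diff_comp // /=.
have Dp : 'D_1 p t = closed_loop tl hd dist Eo phat (p t) by exact: derive_val.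
rewrite -(deriveE _ dp) Dp -deriveE //.
have DV := (part1 (p t)).2 (closed_loop tl hd dist Eo phat (p t)).
rewrite (@derive_val _ _ _ _ _ _ _ DV).
by rewrite /closed_loop frob_dotNl frob_dotNr opprK /frob_sqnorm.
Qed.
End Grad.


Section Topo.
Variable R : realType.

Lemma lip_cont (V W : normedModType R) (f : V -> W) :
  (forall x, exists2 C, 0 <= C & exists2 r, 0 < r &
     forall y, `|x - y| < r -> `|f x - f y| <= C * `|x - y|) -> continuous f.
Proof.
move=> Hf x; apply/cvgrPdist_lt => e e0.
have [C C0 [r r0 Hr]] := Hf x.
have C1 : 0 < C + 1 by rewrite ltr_wpDl.
have e1 : 0 < Num.min r (e / (C + 1)) by rewrite lt_min r0 divr_gt0.
near=> y.
have hy : `|x - y| < Num.min r (e / (C + 1)).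
  near: y; have := near_ball x _ e1; rewrite -ball_normE /ball_ /=; exact.
move: hy; rewrite lt_min => /andP[hr he].
apply: le_lt_trans (Hr _ hr) _.
move: he; rewrite ltr_pdivlMr // => he.
have := normr_ge0 (x - y); nra.
Unshelve. all: by end_near.
Qed.

Lemma vec_mxB p q (u v : 'rV[R]_(p * q)) : vec_mx (u - v) = vec_mx u - vec_mx v.
Proof. by apply/matrixP => i j; rewrite !mxE. Qed.

Lemma vec_mx_norm p q (u : 'rV[R]_(p * q)) : `|vec_mx u| <= `|u|.
Proof. by apply: mxn_le => // i j; rewrite mxE; apply: mxn_entry. Qed.

Lemma mxvec_norm p q (X : 'M[R]_(p, q)) : `|mxvec X| <= `|X|.
Proof.
apply: mxn_le => // i k; rewrite [i]ord1.
by case/mxvec_indexP: k => a b; rewrite mxvecE; apply: mxn_entry.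
Qed.

Lemma vec_mx_cont p q : continuous (@vec_mx R p q).
Proof.
apply: lip_cont => x; exists 1 => //; exists 1 => // y _.
by rewrite -vec_mxB mul1r vec_mx_norm.
Qed.

Lemma mx_compact p q (A : set 'M[R]_(p, q)) B :
  (forall z, A z -> `|z| <= B) -> closed A -> compact A.
Proof.
move=> AB Acl.
set A' := (@vec_mx R p q) @^-1` A.
have cA' : closed A' by move: Acl; apply: (continuous_closedP _).1; exact: vec_mx_cont.
have bA' : bounded_set A'.
  exists B; split; first exact: num_real.
  move=> M BM v /= Av; apply: le_trans (ltW BM).
  rewrite -(vec_mxK v); apply: le_trans (mxvec_norm _) _; exact: AB.
have := continuous_compact (continuous_subspaceT (@vec_mx_cont p q))
  (bounded_closed_compact bA' cA').
congr compact; apply/seteqP; split => [z [v Av <-]//|z Az].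
by exists (mxvec z); rewrite /A' /= mxvecK.
Qed.

End Topo.


Section RHelpers.
Variable R : realType.

Lemma sub4 (W : zmodType) (a b c e : W) : a - b - (c - e) = (a - c) - (b - e).
Proof. by rewrite !opprB addrACA [RHS]addrACA [- c + _]addrC. Qed.

Lemma mxBE p q (A B : 'M[R]_(p, q)) i j : (A - B) i j = A i j - B i j.
Proof. by rewrite !mxE. Qed.

Lemma isdR_lin (q : nat) (a : 'I_q -> R) (f : 'I_q -> R -> R) (df : 'I_q -> R) t :
  (forall i, is_derive t (1 : R) (f i) (df i)) ->
  is_derive t (1 : R) (fun s => \sum_i a i * f i s) (\sum_i a i * df i).
Proof.
move=> Hf.
have := @is_derive_sum R R R q (fun i => a i *: f i) t 1 (fun i => a i *: df i)
  (fun i => is_deriveZ (a i) (Hf i)).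
by rewrite fct_sumE.
Qed.

Lemma entry_derive p q (f : R -> 'M[R]_(p, q)) (t : R) D (i : 'I_p) (j : 'I_q) :
  is_derive t (1 : R) f D -> is_derive t (1 : R) (fun s => f s i j) (D i j).
Proof.
move=> hf; have df : derivable f t 1 by exact: ex_derive.
have dfij := (derivable_mxP f t 1).1 df i j.
apply: DeriveDef => //.
have := derive_mx df; rewrite (@derive_val _ _ _ _ _ _ _ hf) => ->.
by rewrite mxE.
Qed.

End RHelpers.

Section Conv.
Variables (R : realType) (n d m : nat).
Variables (tl hd : 'I_m -> 'I_n) (dist : 'I_m -> R) (Eo : {set 'I_m}).
Variable (phat : 'I_n -> 'rV[R]_d).
Hypothesis tlhd : forall k, tl k != hd k.
Hypothesis uniqE : forall k l, [set tl k; hd k] = [set tl l; hd l] -> k = l.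

Local Notation H := (incidence R tl hd).
Local Notation Az := (Az tl hd dist Eo phat).
Local Notation Uz := (Uz tl hd dist Eo phat).
Local Notation F := (closed_loop tl hd dist Eo phat).
Local Notation G := (grad_term tl hd dist Eo phat).
Local Notation V := (potential tl hd dist Eo phat).
Local Notation Mn := 'M[R]_(n, d).
Local Notation Mm := 'M[R]_(m, d).

Definition Fz (z : Mm) : Mm := - (H *m (H^T *m Az z)).

Lemma GE (P : Mn) : G P = H^T *m Az (H *m P).
Proof. by rewrite (grad_termE dist Eo phat tlhd uniqE). Qed.

Lemma HF (P : Mn) : H *m F P = Fz (H *m P).
Proof. by rewrite /closed_loop GE mulmxN. Qed.

Lemma VE2 (P : Mn) : V P = Uz (H *m P).
Proof. by rewrite (potentialE dist Eo phat tlhd). Qed.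

Definition cF := mabsum H * mabsum H^T.
Lemma cF_ge0 : 0 <= cF.
Proof. by rewrite mulr_ge0 ?mabsum_ge0. Qed.

Lemma Fz_lip (z z' : Mm) : `|Fz z - Fz z'| <= cF * `|Az z - Az z'|.
Proof.
have -> : Fz z - Fz z' = - (H *m (H^T *m (Az z - Az z'))).
  by rewrite /Fz !mulmxBr opprB addrC opprK.
rewrite normrN; apply: le_trans (mxn_mul _ _) _.
rewrite /cF -mulrA; apply: ler_wpM2l; first exact: mabsum_ge0.
exact: mxn_mul.
Qed.

Lemma Uz_ge0 (z : Mm) : 0 <= Uz z.
Proof.
rewrite /Submission.Uz addr_ge0 // mulr_ge0 //; apply: sumr_ge0 => k _; rewrite ?sqr_ge0 //.
by apply: sumr_ge0 => c _; rewrite sqr_ge0.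
Qed.

Definition D0 := \sum_k dist k ^+ 2.
Definition Bz (U0 : R) := 2 + 4 * U0 + D0.

Lemma Uz_bound (z : Mm) U0 : Uz z <= U0 -> `|z| <= Bz U0.
Proof.
move=> hU.
have U00 : 0 <= U0 by apply: le_trans (Uz_ge0 z) hU.
have D00 : 0 <= D0 by apply: sumr_ge0 => *; exact: sqr_ge0.
apply: mxn_le; first by rewrite /Bz; lra.
move=> k c.
have h1 : eZ dist z k ^+ 2 <= 4 * U0.
  have : 4^-1 * \sum_k eZ dist z k ^+ 2 <= U0.
    apply: le_trans hU; rewrite /Submission.Uz lerDl mulr_ge0 //.
    by apply: sumr_ge0 => *; apply: sumr_ge0 => *; exact: sqr_ge0.
  have : eZ dist z k ^+ 2 <= \sum_k eZ dist z k ^+ 2.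
    rewrite (bigD1 k) //= lerDl; apply: sumr_ge0 => *; exact: sqr_ge0.
  lra.
have h2 : z k c ^+ 2 <= \sum_(c0 < d) z k c0 ^+ 2.
  rewrite (bigD1 c) //= lerDl; apply: sumr_ge0 => *; exact: sqr_ge0.
have h3 : dist k ^+ 2 <= D0.
  rewrite /D0 (bigD1 k) //= lerDl; apply: sumr_ge0 => *; exact: sqr_ge0.
have h4 : eZ dist z k = \sum_(c0 < d) z k c0 ^+ 2 - dist k ^+ 2 by [].
set e := eZ dist z k in h1 h4.
have h5 : z k c ^+ 2 <= 1 + 4 * U0 + D0 by nra.
have h6 : `|z k c| ^+ 2 = z k c ^+ 2 by rewrite real_normK ?num_real.
have := normr_ge0 (z k c); rewrite /Bz; nra.
Qed.


Lemma cont_entry k c : continuous (fun P : Mn => (H *m P) k c).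
Proof.
apply: lip_cont => P; exists (mabsum H); first exact: mabsum_ge0.
exists 1 => // Q _.
have -> : (H *m P) k c - (H *m Q) k c = (H *m (P - Q)) k c by rewrite mulmxBr !mxE.
apply: le_trans (mxn_entry _ _ _) _; exact: mxn_mul.
Qed.

Lemma cont_distz (z0 : Mm) : continuous (fun P : Mn => `|H *m P - z0|).
Proof.
apply: lip_cont => P; exists (mabsum H); first exact: mabsum_ge0.
exists 1 => // Q _.
apply: le_trans (ler_dist_dist _ _) _.
have -> : H *m P - z0 - (H *m Q - z0) = H *m (P - Q).
  by rewrite mulmxBr opprB addrA subrK.
exact: mxn_mul.
Qed.

Lemma cont_V : continuous V.
Proof.
move=> P; apply: differentiable_continuous.
exact: (part1 dist Eo phat tlhd uniqE P).1.
Qed.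

Lemma Fz_norm (z : Mm) : `|Fz z| <= cF * `|Az z|.
Proof.
rewrite /Fz normrN; apply: le_trans (mxn_mul _ _) _.
rewrite /cF -mulrA; apply: ler_wpM2l; first exact: mabsum_ge0.
exact: mxn_mul.
Qed.

Lemma cont_normAz : continuous (fun z : Mm => `|H^T *m Az z|).
Proof.
apply: lip_cont => z.
have B0 : 0 <= `|z| + 1 by rewrite addr_ge0 // normr_ge0.
have [L L0 HL] := Az_lip tl hd dist Eo phat B0.
exists (mabsum H^T * L); first by rewrite mulr_ge0 // mabsum_ge0.
exists 1 => // y zy.
apply: le_trans (ler_dist_dist _ _) _.
rewrite -mulmxBr; apply: le_trans (mxn_mul _ _) _.
rewrite -mulrA; apply: ler_wpM2l; first exact: mabsum_ge0.
apply: HL; first by rewrite lerDl.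
have := ler_normB z (z - y); rewrite opprB addrC subrK => h.
apply: le_trans h _; lra.
Qed.

Definition Xp : 'M[R]_(m, m) := pinvmx H^T *m H^T.

Lemma imHP (z : Mm) : (exists P : Mn, z = H *m P) <-> z = Xp^T *m z.
Proof.
split=> [[P ->]|ez].
  have e : (H *m P)^T *m Xp = (H *m P)^T.
    by rewrite /Xp mulmxA mulmxKpV // trmx_mul submxMl.
  by apply/esym; rewrite -[X in _ = X]trmxK -e (trmx_mul ((H *m P)^T) Xp) trmxK.
exists ((pinvmx H^T)^T *m z).
have eX : Xp^T = H *m (pinvmx H^T)^T.
  by rewrite /Xp (trmx_mul (pinvmx H^T) H^T) trmxK.
by rewrite mulmxA -eX -ez.
Qed.

Lemma delta_lemma (B e : R) : 0 < e -> exists2 dl, 0 < dl & forall z : Mm,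
  (exists P : Mn, z = H *m P) -> `|z| <= B ->
  (forall y, O_set tl hd dist Eo phat y -> e <= `|z - y|) ->
  dl <= `|H^T *m Az z|.
Proof.
move=> e0.
pose K := [set z : Mm | `|z - Xp^T *m z| <= 0] `&` [set z : Mm | `|z| <= B] `&`
  \bigcap_(y in O_set tl hd dist Eo phat) [set z : Mm | e <= `|z - y|].
have inK z : (exists P : Mn, z = H *m P) -> `|z| <= B ->
    (forall y, O_set tl hd dist Eo phat y -> e <= `|z - y|) -> K z.
  move=> /imHP ez zB zO; split; [split|] => //=.
  by rewrite -ez subrr normr0.
have Kcl : closed K.
  apply: closedI; first apply: closedI.
  - have c1 : continuous (fun z : Mm => `|z - Xp^T *m z|).
      apply: lip_cont => z; exists (1 + mabsum Xp^T).
        by rewrite addr_ge0 // mabsum_ge0.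
      exists 1 => // y _; apply: le_trans (ler_dist_dist _ _) _.
      have -> : z - Xp^T *m z - (y - Xp^T *m y) = (z - y) - Xp^T *m (z - y).
        by rewrite mulmxBr sub4.
      apply: le_trans (ler_normB _ _) _; rewrite mulrDl mul1r lerD2l.
      exact: mxn_mul.
    have h := (continuous_closedP _).1 c1 _ (@closed_le R 0).
    exact: h.
  - have h := (continuous_closedP _).1 (@norm_continuous _ Mm) _ (@closed_le R B).
    exact: h.
  - apply: closed_bigI => y _.
    have c3 : continuous (fun z : Mm => `|z - y|).
      apply: lip_cont => z; exists 1 => //; exists 1 => // w _.
      apply: le_trans (ler_dist_dist _ _) _; rewrite mul1r.
      by rewrite opprB addrA subrK.
    have h := (continuous_closedP _).1 c3 _ (@closed_ge R e).
    exact: h.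
have Kcp : compact K by apply: (@mx_compact _ _ _ K B) => // z [[_ ?] _].
have [K0|nK] := pselect (K !=set0); last first.
  exists 1 => // z a b c; exfalso; apply: nK; exists z; exact: inK.
have [c cK cmin] := compact_EVT_min K0 Kcp
  (continuous_subspaceT cont_normAz).
exists (`|H^T *m Az c|); last first.
  by move=> z a b f; apply: cmin; apply/mem_set; apply: inK.
rewrite lt_neqAle normr_ge0 andbT eq_sym normr_eq0; apply/negP => /eqP c0.
move: cK; rewrite inE => -[[c1 _] c3].
have cO : O_set tl hd dist Eo phat c.
  have : c = Xp^T *m c by move: c1 => /=; rewrite normr_le0 subr_eq0 => /eqP.
  move/imHP => [P eP]; exists P; split => //.
  by rewrite GE -eP.
have := c3 c cO; rewrite /= subrr normr0; lra.
Qed.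

Section Traj.
Variable p : R -> Mn.
Hypothesis hp : fwd_solution tl hd dist Eo phat p.

Lemma p_der (t : R) : 0 < t -> is_derive t (1 : R) p (F (p t)).
Proof. by move=> t0; exact: hp.2. Qed.

Lemma p_cont_at (t : R) : 0 < t -> {for t, continuous p}.
Proof.
move=> t0; have hpt := p_der t0; apply: differentiable_continuous.
apply/derivable1_diffP; exact: ex_derive.
Qed.

Lemma cont_g (g : Mn -> R) : continuous g -> forall a b, 0 <= a -> a < b ->
  {within `[a, b], continuous (g \o p)}.
Proof.
move=> gc a b a0 ab; apply/continuous_within_itvP => //; split.
- move=> x; rewrite in_itv /= => /andP[ax xb]; apply: continuous_comp.
    apply: p_cont_at; exact: le_lt_trans ax.
  exact: gc.
- have [a00|apos] : a = 0 \/ 0 < a.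
    by move: a0; rewrite le_eqVlt => /orP[/eqP<-|->]; [left|right].
    subst a; exact: (cvg_comp _ _ hp.1 (gc (p 0))).
  apply: cvg_at_right_filter; apply: continuous_comp; [exact: p_cont_at|exact: gc].
- apply: cvg_at_left_filter; apply: continuous_comp; last exact: gc.
  apply: p_cont_at; exact: le_lt_trans ab.
Qed.

Lemma z_der (t : R) k c : 0 < t ->
  is_derive t (1 : R) (fun s => (H *m p s) k c) (Fz (H *m p t) k c).
Proof.
move=> t0.
have := isdR_lin (fun i => H k i) (f := fun i s => p s i c) (df := fun i => F (p t) i c)
  (fun i => entry_derive i c (p_der t0)).
rewrite (_ : (fun s => \sum_i _) = (fun s => (H *m p s) k c)); last first.
  by apply/funext => s; rewrite mxE.
move/is_derive_eq; apply.
by rewrite -HF mxE.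
Qed.

Lemma V_nonincr (s t : R) : 0 <= s -> s <= t -> V (p t) <= V (p s).
Proof.
move=> s0; rewrite le_eqVlt => /orP[/eqP->//|st].
have hx x : x \in `]s, t[%R -> 0 < x.
  by rewrite in_itv /= => /andP[sx _]; exact: le_lt_trans s0 sx.
have [c cin eq] := MVT st (fun x xin => (part2 tlhd uniqE (p_der (hx x xin))).1)
  (cont_g cont_V s0 st).
have := (part2 tlhd uniqE (p_der (hx c cin))).2.
move: eq; rewrite /= => eq.
have ts : 0 < t - s by rewrite subr_gt0.
set D := - frob_sqnorm _ in eq *; nra.
Qed.

Lemma z_bound (t : R) : 0 <= t -> `|H *m p t| <= Bz (Uz (H *m p 0)).
Proof.
move=> t0; apply: Uz_bound; rewrite -!VE2; exact: V_nonincr.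
Qed.

Lemma z_vel (s t Mv : R) : 0 <= s -> s < t ->
  (forall u, s < u -> u < t -> `|Fz (H *m p u)| <= Mv) ->
  `|H *m p t - H *m p s| <= Mv * (t - s).
Proof.
move=> s0 st hM.
have hx x : x \in `]s, t[%R -> 0 < x.
  by rewrite in_itv /= => /andP[sx _]; exact: le_lt_trans s0 sx.
have Mv0 : 0 <= Mv.
  apply: le_trans (hM ((s + t) / 2) _ _); [exact: normr_ge0|lra|lra].
apply: mxn_le; first by rewrite mulr_ge0 // subr_ge0 ltW.
move=> k c.
have [x xin eq] := MVT st (fun x xin => z_der k c (hx x xin))
  (cont_g (@cont_entry k c) s0 st).
rewrite mxBE; move: eq => /= ->.
rewrite normrM (@gtr0_norm _ (t - s)) ?subr_gt0 //.
apply: ler_wpM2r; first by rewrite subr_ge0 ltW.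
apply: le_trans (mxn_entry _ _ _) _.
by move: xin; rewrite in_itv /= => /andP[sx xt]; apply: hM.
Qed.

Lemma z_const : O_set tl hd dist Eo phat (H *m p 0) ->
  forall t : R, 0 <= t -> H *m p t = H *m p 0.
Proof.
case=> P0 [eP0 GP0].
set z0 := H *m p 0.
have Fz0 : Fz z0 = 0.
  by rewrite /Fz /z0 eP0 /relpos -GE GP0 mulmx0 oppr0.
set B := Bz (Uz z0).
have zB (u : R) : 0 <= u -> `|H *m p u| <= B by move=> u0; exact: z_bound.
have B0 : 0 <= B by apply: le_trans (zB 0 (lexx 0)); exact: normr_ge0.
have [L L0 HL] := Az_lip tl hd dist Eo phat B0.
set Lf := cF * L + 1.
have Lf0 : 0 < Lf by rewrite /Lf ltr_wpDl // mulr_ge0 // cF_ge0.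
set s := (2 * Lf)^-1.
have s0 : 0 < s by rewrite /s invr_gt0 mulr_gt0.
have Lfs : Lf * s = 2^-1 by rewrite /s invfM mulrCA mulfV ?mulr1 // gt_eqF.
have key t0 : 0 <= t0 -> H *m p t0 = z0 ->
    forall t, t0 <= t -> t <= t0 + s -> H *m p t = z0.
  move=> t00 zt0.
  have ts : t0 < t0 + s by rewrite ltrDl.
  have rc := cont_g (@cont_distz z0) t00 ts.
  have [us usin umax] := EVT_max (ltW ts) rc.
  set Mx := ((fun P : Mn => `|H *m P - z0|) \o p) us in umax.
  have Mx0 : 0 <= Mx by exact: normr_ge0.
  have inI u : t0 <= u -> u <= t0 + s -> u \in `[t0, t0 + s]%R.
    by move=> a b; rewrite in_itv /= a b.
  have half u : t0 <= u -> u <= t0 + s -> `|H *m p u - z0| <= Mx / 2.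
    move=> a b; move: a; rewrite le_eqVlt => /orP[/eqP<-|tu].
      by rewrite zt0 subrr normr0 divr_ge0.
    rewrite -{1}zt0.
    have := @z_vel t0 u (Lf * Mx) t00 tu.
    have hw : forall w, t0 < w -> w < u -> `|Fz (H *m p w)| <= Lf * Mx.
      move=> w tw wu.
      have w0 : 0 <= w by apply: le_trans (ltW tw).
      rewrite -[Fz _]subr0 -Fz0; apply: le_trans (Fz_lip _ _) _.
      have h1 := HL _ _ (zB w w0) (zB 0 (lexx 0)).
      have h2 : `|H *m p w - z0| <= Mx.
        by apply: (umax w); apply: inI; [exact: ltW|apply: le_trans (ltW wu) b].
      have h3 := cF_ge0.
      have h4 : cF * `|Az (H *m p w) - Az z0| <= cF * (L * `|H *m p w - z0|).
        by apply: ler_wpM2l.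
      have h5 : L * `|H *m p w - z0| <= L * Mx by apply: ler_wpM2l.
      rewrite /Lf; nra.
    move/(_ hw) => h.
    apply: le_trans h _.
    have : u - t0 <= s by lra.
    move=> us'; have : Lf * Mx * (u - t0) <= Lf * Mx * s.
      by apply: ler_wpM2l => //; rewrite mulr_ge0 // ltW.
    have e : Lf * Mx * s = Mx / 2 by rewrite mulrAC Lfs mulrC.
    lra.
  have : Mx <= Mx / 2.
    move: usin; rewrite in_itv /= => /andP[a b]; exact: half.
  move=> MM t a b.
  have : `|H *m p t - z0| <= 0.
    apply: le_trans (umax t (inI t a b)) _; lra.
  by rewrite normr_le0 subr_eq0 => /eqP.
have ind (j : nat) : forall t, 0 <= t -> t <= j%:R * s -> H *m p t = z0.
  elim: j => [|j IH] t t0 tj.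
    by have -> : t = 0 by move: tj; rewrite mul0r => tj; lra.
  have [tj'|tj'] := leP t (j%:R * s); first exact: IH.
  have js0 : 0 <= j%:R * s by rewrite mulr_ge0 // ltW.
  apply: (key (j%:R * s)) => //; first exact: IH.
    exact: ltW.
  by move: tj; rewrite -natr1 mulrDl mul1r.
move=> t t0.
have hb := archi_boundP (divr_ge0 t0 (ltW s0)).
apply: (ind (Num.Def.archi_bound (t / s))) => //.
by move: hb; rewrite ltr_pdivrMr // => /ltW.
Qed.

Lemma z_conv : converges_to_set (fun t => H *m p t) (O_set tl hd dist Eo phat).
Proof.
move=> eps eps0.
set N : R := (m * d)%:R.
have N0 : 0 <= N by rewrite /N ler0n.
set eps1 := eps / (N + 1).
have eps10 : 0 < eps1 by rewrite divr_gt0 // ltr_wpDl.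
suff : \forall t \near +oo, exists2 y, O_set tl hd dist Eo phat y & `|H *m p t - y| < eps1.
  apply: filterS => t [y Oy hy]; exists y => //.
  have h1 := frob_le (H *m p t - y).
  have h2 : `|H *m p t - y| * (N + 1) < eps by rewrite -ltr_pdivlMr // ltr_wpDl.
  have h3 := normr_ge0 (H *m p t - y).
  have h4 : frob_sqnorm (H *m p t - y) < eps ^+ 2.
    apply: le_lt_trans h1 _; rewrite -/N.
    set w := `|H *m p t - y| in h2 h3 *.
    have h5 : (w * (N + 1)) ^+ 2 < eps ^+ 2.
      by rewrite ltrXn2r // ?nnegrE ?mulr_ge0 ?addr_ge0 // ltW.
    have h6 : 0 <= w ^+ 2 * (N ^+ 2 + N + 1) by rewrite mulr_ge0 ?sqr_ge0 // !addr_ge0 ?sqr_ge0.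
    have e7 : (w * (N + 1)) ^+ 2 = N * w ^+ 2 + w ^+ 2 * (N ^+ 2 + N + 1) by ring.
    lra.
  rewrite -(ger0_norm (ltW eps0)) -sqrtr_sqr ltr_sqrt //.
  by rewrite exprn_gt0.
apply: contrapT => H0.
set P := fun t : R => exists2 y, O_set tl hd dist Eo phat y & `|H *m p t - y| < eps1.
have bad (M : R) : exists2 t, M < t & forall y, O_set tl hd dist Eo phat y -> eps1 <= `|H *m p t - y|.
  apply: contrapT => nb; apply: H0; exists M; split; first exact: num_real.
  move=> t Mt; apply: contrapT => nPt; apply: nb; exists t => // y Oy.
  by rewrite leNgt; apply/negP => lt; apply: nPt; exists y.
set z0 := H *m p 0.
set B := Bz (Uz z0).
have zB (u : R) : 0 <= u -> `|H *m p u| <= B by move=> u0; exact: z_bound.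
have B0 : 0 <= B by apply: le_trans (zB 0 (lexx 0)); exact: normr_ge0.
set e' := eps1 / 2.
have e'0 : 0 < e' by rewrite divr_gt0.
have [dl dl0 Hdl] := delta_lemma B e'0.
have [L L0 HL] := Az_lip tl hd dist Eo phat B0.
set Mv := cF * (L * B + `|Az 0|) + 1.
have Mv0 : 0 < Mv by rewrite ltr_wpDl // mulr_ge0 ?cF_ge0 // addr_ge0 // mulr_ge0.
have hMv (u : R) : 0 <= u -> `|Fz (H *m p u)| <= Mv.
  move=> u0; apply: le_trans (Fz_norm _) _.
  have a1 : `|Az (H *m p u)| <= L * B + `|Az 0|.
    have := HL _ 0 (zB u u0); rewrite normr0 subr0 => /(_ B0) h.
    have := ler_normD (Az (H *m p u) - Az 0) (Az 0); rewrite subrK => h'.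
    apply: le_trans h' _; rewrite lerD2r; apply: le_trans h _.
    by apply: ler_wpM2l => //; apply: zB.
  have := cF_ge0 => c0.
  rewrite /Mv; apply: le_trans (ler_wpM2l c0 a1) _; lra.
set tau := e' / Mv.
have tau0 : 0 < tau by rewrite divr_gt0.
set c := dl ^+ 2 * tau.
have c0 : 0 < c by rewrite mulr_gt0 // exprn_gt0.
have step (t : R) : 0 < t ->
    (forall y, O_set tl hd dist Eo phat y -> eps1 <= `|H *m p t - y|) ->
    V (p (t + tau)) <= V (p t) - c.
  move=> t0 far.
  have tt : t < t + tau by rewrite ltrDl.
  have hx x : x \in `]t, t + tau[%R -> 0 < x.
    by rewrite in_itv /= => /andP[sx _]; exact: lt_trans sx.
  have [x xin eq] := MVT tt (fun x xin => (part2 tlhd uniqE (p_der (hx x xin))).1)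
    (cont_g cont_V (ltW t0) tt).
  move: eq => /= eq.
  have [tx xt] : t < x /\ x < t + tau by move: xin; rewrite in_itv /= => /andP[].
  have vel : `|H *m p x - H *m p t| <= Mv * (x - t).
    apply: z_vel => //; first exact: ltW.
    move=> u tu _; apply: hMv; apply: le_trans (ltW tu); exact: ltW.
  have vel' : `|H *m p x - H *m p t| <= e'.
    apply: le_trans vel _; rewrite /tau in xt.
    have : x - t <= e' / Mv by lra.
    rewrite ler_pdivlMr // => h; rewrite mulrC; exact: h.
  have Gd : dl <= `|grad_term tl hd dist Eo phat (p x)|.
    rewrite GE; apply: Hdl.
    - by exists (p x).
    - apply: zB; apply: le_trans (ltW tx); exact: ltW.
    - move=> y Oy; have fy := far y Oy.
      have := ler_normD (H *m p t - H *m p x) (H *m p x - y).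
      rewrite addrA subrK (distrC (H *m p t) (H *m p x)) => tri.
      rewrite /e' in vel' *.
      lra.
  have fr := frob_ge (grad_term tl hd dist Eo phat (p x)).
  have : dl ^+ 2 <= `|grad_term tl hd dist Eo phat (p x)| ^+ 2.
    by rewrite lerXn2r // ?nnegrE ?normr_ge0 // ltW.
  move=> dG.
  have eqtau : t + tau - t = tau by rewrite addrC addKr.
  rewrite eqtau in eq.
  rewrite /c; set FF := frob_sqnorm _ in eq fr.
  nra.
have ind (j : nat) : exists2 t : R, 0 <= t & V (p t) <= V (p 0) - j%:R * c.
  elim: j => [|j [tj tj0 IH]]; first by exists 0 => //; rewrite mul0r subr0.
  have [t tjt far] := bad tj.
  have t0 : 0 < t by apply: le_lt_trans tjt.
  exists (t + tau); first by rewrite addr_ge0 // ltW.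
  have := step t t0 far.
  have := V_nonincr tj0 (ltW tjt).
  rewrite -natr1 mulrDl mul1r; lra.
have V00 : 0 <= V (p 0) by rewrite VE2 Uz_ge0.
have hb := archi_boundP (divr_ge0 V00 (ltW c0)).
have [t t0 Vt] := ind (Num.Def.archi_bound (V (p 0) / c)).
have : V (p 0) < (Num.Def.archi_bound (V (p 0) / c))%:R * c.
  by rewrite -ltr_pdivrMr.
have := Uz_ge0 (H *m p t); rewrite -VE2; lra.
Qed.

End Traj.

End Conv.


Unset Implicit Arguments.
Set Strict Implicit.

Theorem theorem2 (R : realType) (n d m : nat)
  (tl hd : 'I_m -> 'I_n) (dist : 'I_m -> R) (Eo : {set 'I_m})
  (phat : 'I_n -> 'rV[R]_d) :
  (d = 2 \/ d = 3)%N -> (2 <= n)%N ->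
  (* simple undirected graph: no self loops, no repeated edges *)
  (forall k, tl k != hd k) ->
  (forall k l, [set tl k; hd k] = [set tl l; hd l] -> k = l) ->
  (forall k, 0 < dist k) ->
  (* desired relative positions of orientation edges have length d_k *)
  (forall k, k \in Eo -> enorm (phat (hd k) - phat (tl k)) = dist k) ->
  let H := incidence R tl hd : 'M[R]_(m, n) in
  let F := closed_loop tl hd dist Eo phat in
  let V := potential tl hd dist Eo phat in
  let G := grad_term tl hd dist Eo phat in
  (* (1) gradient descent flow: pdot = - grad V *)
  (forall P : 'M[R]_(n, d), differentiable V P /\
     forall h : 'M[R]_(n, d), is_derive P h V (- frob_dot (F P) h)) /\
  (* (2) Vdot = - || R^T e + (L_o (x) I_d) pbar ||^2 <= 0 along solutions *)
  (forall (p : R -> 'M[R]_(n, d)) (t : R),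
     is_derive t (1 : R) p (F (p t)) ->
     is_derive t (1 : R) (V \o p) (- frob_sqnorm (G (p t))) /\
     - frob_sqnorm (G (p t)) <= 0) /\
  (* (3) the induced z-dynamics is self-contained *)
  (exists Fz : 'M[R]_(m, d) -> 'M[R]_(m, d),
     forall P : 'M[R]_(n, d), H *m F P = Fz (H *m P)) /\
  (* (4) z(t) = (H (x) I_d) p(t) converges to the largest invariant set in O *)
  (forall p : R -> 'M[R]_(n, d),
     fwd_solution tl hd dist Eo phat p ->
     converges_to_set (fun t => H *m p t)
       (largest_invariant_in_O tl hd dist Eo phat)).
Proof.
move=> _ _ tlhd uniqE _ _ H F V G.
rewrite /H /F /V /G.
split; first by move=> P; exact: (part1 dist Eo phat tlhd uniqE P).
split; first by move=> p t hp; exact: (part2 tlhd uniqE hp).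
split.
  exists (Fz tl hd dist Eo phat) => P; exact: (HF dist Eo phat tlhd uniqE P).
move=> p hp eps eps0.
have := z_conv tlhd uniqE hp eps0.
apply: filterS => t [y Oy hy]; exists y => //.
exists (O_set tl hd dist Eo phat); split; last by split.
split.
  move=> q hq Oq s s0.
  have e := z_const tlhd uniqE hq Oq s0.
  by rewrite /relpos e.
move=> z0 [P [ez GP]].
exists (fun _ => P); split; last by split => // _; exists P.
move=> s; rewrite /closed_loop GP oppr0; exact: is_derive_cst.
Qed.
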